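(* Let $(\eta_t)$ be an irreducible continuous-time Markov chain on a finite set $E$ with jump rates $R(\eta,\xi)$ and invariant probability $\mu$. Let $R^s(\eta,\xi)=\tfrac12\{R(\eta,\xi)+\mu(\xi)R(\xi,\eta)/\mu(\eta)\}$ be the rates of the reversible chain, and denote by $\mathrm{Cap}$ and $\mathrm{Cap}^s$ the capacities with respect to the original and the reversible chain. Then for any two disjoint nonempty subsets $A,B$ of $E$, $$\mathrm{Cap}^s(A,B)\le\mathrm{Cap}(A,B)\le2|E|\,\mathrm{Cap}^s(A,B).$$
   Context: For a chain on $E$ with rates $Q(\eta,\xi)$, holding rates $\lambda(\eta)=\sum_{\xi\ne\eta}Q(\eta,\xi)$ and invariant probability $\mu$, the capacity between disjoint nonempty $A,B$ is $\sum_{\eta\in A}\mu(\eta)\lambda(\eta)\mathbb P_\eta[H_B<H^+_A]$, where $H_B=\inf\{t>0:\eta_t\in B\}$, $H^+_A=\inf\{t>\tau_1:\eta_t\in A\}$ and $\tau_1$ is the first jump time. (The reversible chain with rates $R^s$ has $\mu$ as reversible invariant measure.) *)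

(* Defs.v *)
(* the state space E is {0,...,n-1} (so |E| = n); real rates. *)
From Stdlib Require Import Reals List Relations ClassicalEpsilon.
Open Scope R_scope.

Definition rsum (n : nat) (f : nat -> R) : R :=
  fold_right Rplus 0 (map f (seq 0 n)).

Definition hold (n : nat) (Q : nat -> nat -> R) (x : nat) : R :=
  rsum n (fun y => if Nat.eqb y x then 0 else Q x y).

(* transition probabilities of the embedded jump chain: Q(x,y)/lambda(x), y <> x *)
Definition jump (n : nat) (Q : nat -> nat -> R) (x y : nat) : R :=
  if Nat.eqb y x then 0 else Q x y / hold n Q x.

(* hitB K x = P_x[ the jump chain, started at x (time 0 included), hits B
   within K jumps and before hitting A ]  (sum over the corresponding paths) *)
Fixpoint hitB (n : nat) (Q : nat -> nat -> R) (A B : nat -> bool) (K : nat) (x : nat) : R :=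
  match K with
  | O => if B x then 1 else 0
  | S K' => if B x then 1 else if A x then 0
            else rsum n (fun y => jump n Q x y * hitB n Q A B K' y)
  end.

(* P_x[ H_B < H_A^+ and H_B occurs within the first K+1 jumps ]:
   first jump, then hit B before A (time 0 after the jump included). *)
Definition escape_le (n : nat) (Q : nat -> nat -> R) (A B : nat -> bool) (K : nat) (x : nat) : R :=
  rsum n (fun y => jump n Q x y * hitB n Q A B K y).

Definition lim (u : nat -> R) : R :=
  epsilon (inhabits 0) (fun l => Un_cv u l).

(* P_x[ H_B < H_A^+ ] = increasing limit over the number of jumps *)
Definition escape (n : nat) (Q : nat -> nat -> R) (A B : nat -> bool) (x : nat) : R :=
  lim (fun K => escape_le n Q A B K x).

Definition capacity (n : nat) (Q : nat -> nat -> R) (mu : nat -> R) (A B : nat -> bool) : R :=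
  rsum n (fun x => if A x then mu x * hold n Q x * escape n Q A B x else 0).

Definition valid_rates (n : nat) (Q : nat -> nat -> R) : Prop :=
  forall x y, (x < n)%nat -> (y < n)%nat -> x <> y -> 0 <= Q x y.

Definition irreducible (n : nat) (Q : nat -> nat -> R) : Prop :=
  forall x y, (x < n)%nat -> (y < n)%nat ->
    clos_refl_trans nat
      (fun a b => (a < n)%nat /\ (b < n)%nat /\ a <> b /\ 0 < Q a b) x y.

Definition invariant_prob (n : nat) (Q : nat -> nat -> R) (mu : nat -> R) : Prop :=
  (forall x, (x < n)%nat -> 0 <= mu x) /\
  rsum n mu = 1 /\
  (forall y, (y < n)%nat ->
     rsum n (fun x => if Nat.eqb x y then 0 else mu x * Q x y) = mu y * hold n Q y).

Definition sym_rates (Q : nat -> nat -> R) (mu : nat -> R) (x y : nat) : R :=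
  (Q x y + mu y * Q y x / mu x) / 2.

(* Main.v *)
Require Import Defs.
From Stdlib Require Import Reals List Relations ClassicalEpsilon.
From Stdlib Require Import Lra Lia Psatz.
Open Scope R_scope.

Lemma fr_init (l : list R) (c : R) :
  fold_right Rplus c l = fold_right Rplus 0 l + c.
Proof. induction l; simpl; [lra|rewrite IHl; lra]. Qed.

Lemma rsum_0 f : rsum 0 f = 0.
Proof. reflexivity. Qed.

Lemma rsum_S n f : rsum (S n) f = rsum n f + f n.
Proof.
  unfold rsum. rewrite seq_S, map_app, fold_right_app. simpl.
  rewrite fr_init. lra.
Qed.

Lemma rsum_ext n f g : (forall x, (x < n)%nat -> f x = g x) -> rsum n f = rsum n g.
Proof.
  induction n; intros H.
  - reflexivity.
  - rewrite !rsum_S, IHn.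
    + rewrite H; [reflexivity| lia].
    + intros; apply H; lia.
Qed.

Lemma rsum_plus n f g : rsum n (fun x => f x + g x) = rsum n f + rsum n g.
Proof. induction n; [rewrite !rsum_0; lra|]. rewrite !rsum_S, IHn; lra. Qed.

Lemma rsum_scal n c f : rsum n (fun x => c * f x) = c * rsum n f.
Proof. induction n; [rewrite !rsum_0; lra|]. rewrite !rsum_S, IHn; lra. Qed.

Lemma rsum_minus n f g : rsum n (fun x => f x - g x) = rsum n f - rsum n g.
Proof. induction n; [rewrite !rsum_0; lra|]. rewrite !rsum_S, IHn; lra. Qed.

Lemma rsum_zero n : rsum n (fun _ => 0) = 0.
Proof. induction n; [reflexivity|]. rewrite rsum_S, IHn; lra. Qed.

Lemma rsum_le n f g : (forall x, (x < n)%nat -> f x <= g x) -> rsum n f <= rsum n g.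
Proof.
  induction n; intros H; [rewrite !rsum_0; lra|]. rewrite !rsum_S.
  assert (f n <= g n) by (apply H; lia).
  assert (rsum n f <= rsum n g) by (apply IHn; intros; apply H; lia). lra.
Qed.

Lemma rsum_nonneg n f : (forall x, (x < n)%nat -> 0 <= f x) -> 0 <= rsum n f.
Proof. intros H. rewrite <- (rsum_zero n). apply rsum_le. auto. Qed.

Lemma rsum_term n f y : (forall x, (x < n)%nat -> 0 <= f x) -> (y < n)%nat -> f y <= rsum n f.
Proof.
  induction n; intros H Hy; [lia|]. rewrite rsum_S.
  destruct (Nat.eq_dec y n).
  - subst. assert (0 <= rsum n f) by (apply rsum_nonneg; intros; apply H; lia). lra.
  - assert (f y <= rsum n f) by (apply IHn; [intros; apply H; lia | lia]).
    assert (0 <= f n) by (apply H; lia). lra.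
Qed.

Lemma rsum_swap n m (F : nat -> nat -> R) :
  rsum n (fun x => rsum m (fun y => F x y)) = rsum m (fun y => rsum n (fun x => F x y)).
Proof.
  induction n; simpl.
  - rewrite rsum_0. symmetry. apply rsum_zero.
  - rewrite rsum_S, IHn. rewrite <- rsum_plus. apply rsum_ext. intros. rewrite rsum_S. reflexivity.
Qed.

Lemma rsum_cv n (F : nat -> nat -> R) (G : nat -> R) :
  (forall y, (y < n)%nat -> Un_cv (fun K => F K y) (G y)) ->
  Un_cv (fun K => rsum n (F K)) (rsum n G).
Proof.
  induction n; intros H.
  - intros e He. exists 0%nat. intros. rewrite !rsum_0. unfold R_dist. rewrite Rminus_diag, Rabs_R0. lra.
  - rewrite rsum_S. eapply (Un_cv_ext (fun K => rsum n (F K) + F K n)).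
    { intros. rewrite rsum_S. reflexivity. }
    apply CV_plus; [apply IHn; intros; apply H; lia | apply H; lia].
Qed.


Definition pot n Q A B x := lim (fun K => hitB n Q A B K x).
Definition Lop n (Q : nat -> nat -> R) (g : nat -> R) x :=
  rsum n (fun y => if Nat.eqb y x then 0 else Q x y * (g y - g x)).

Lemma lim_ok u l : Un_cv u l -> lim u = l.
Proof.
  intros H. unfold lim. apply (UL_sequence u); [|exact H].
  apply epsilon_spec. exists l; exact H.
Qed.

Lemma cv_const c : Un_cv (fun _ => c) c.
Proof. intros e He. exists 0%nat. intros. unfold R_dist. rewrite Rminus_diag, Rabs_R0. lra. Qed.

Lemma hold_nonneg n Q x : valid_rates n Q -> (x < n)%nat -> 0 <= hold n Q x.
Proof.
  intros hQ Hx. unfold hold. apply rsum_nonneg. intros y Hy.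
  destruct (Nat.eqb_spec y x); [lra|]. apply hQ; auto.
Qed.

Lemma jump_nonneg n Q x y : valid_rates n Q -> (x < n)%nat -> (y < n)%nat -> 0 <= jump n Q x y.
Proof.
  intros hQ Hx Hy. unfold jump. destruct (Nat.eqb_spec y x); [lra|].
  assert (0 <= Q x y) by (apply hQ; auto).
  assert (0 <= hold n Q x) by (apply hold_nonneg; auto).
  unfold Rdiv. apply Rmult_le_pos; auto. destruct (Req_dec (hold n Q x) 0) as [E|E].
  - rewrite E, Rinv_0; lra.
  - left; apply Rinv_0_lt_compat; lra.
Qed.

Lemma jump_sum n Q x : rsum n (jump n Q x) = hold n Q x * / hold n Q x.
Proof.
  unfold jump. rewrite Rmult_comm. unfold hold at 3. rewrite <- rsum_scal. apply rsum_ext.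
  intros y _. destruct (Nat.eqb y x); unfold Rdiv; ring.
Qed.

Lemma jump_sum_le n Q x : valid_rates n Q -> (x < n)%nat -> rsum n (jump n Q x) <= 1.
Proof.
  intros. rewrite jump_sum. destruct (Req_dec (hold n Q x) 0) as [E|E].
  - rewrite E; lra.
  - rewrite Rinv_r; lra.
Qed.

Lemma hitB_bounds n Q A B K x : valid_rates n Q -> (x < n)%nat ->
  0 <= hitB n Q A B K x <= 1.
Proof.
  intros hQ. revert x. induction K; intros x Hx; simpl.
  - destruct (B x); lra.
  - destruct (B x); [lra|]. destruct (A x); [lra|]. split.
    + apply rsum_nonneg. intros y Hy. apply Rmult_le_pos.
      apply jump_nonneg; auto. apply IHK; auto.
    + apply Rle_trans with (rsum n (jump n Q x)); [|apply jump_sum_le; auto].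
      apply rsum_le. intros y Hy.
      assert (0 <= jump n Q x y) by (apply jump_nonneg; auto).
      specialize (IHK y Hy). nra.
Qed.

Lemma hitB_mono n Q A B K x : valid_rates n Q -> (x < n)%nat ->
  hitB n Q A B K x <= hitB n Q A B (S K) x.
Proof.
  intros hQ. revert x. induction K; intros x Hx.
  - simpl. destruct (B x); [lra|]. destruct (A x); [lra|].
    apply rsum_nonneg. intros y Hy. apply Rmult_le_pos. apply jump_nonneg; auto.
    destruct (B y); lra.
  - change (hitB n Q A B (S K) x) with
      (if B x then 1 else if A x then 0 else rsum n (fun y => jump n Q x y * hitB n Q A B K y)).
    change (hitB n Q A B (S (S K)) x) with
      (if B x then 1 else if A x then 0 else rsum n (fun y => jump n Q x y * hitB n Q A B (S K) y)).
    destruct (B x); [lra|]. destruct (A x); [lra|].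
    apply rsum_le. intros y Hy. apply Rmult_le_compat_l. apply jump_nonneg; auto. apply IHK; auto.
Qed.

Lemma pot_cv n Q A B x : valid_rates n Q -> (x < n)%nat ->
  Un_cv (fun K => hitB n Q A B K x) (pot n Q A B x).
Proof.
  intros hQ Hx.
  assert (Hg : Un_growing (fun K => hitB n Q A B K x)).
  { intros K. apply hitB_mono; auto. }
  assert (Hb : has_ub (fun K => hitB n Q A B K x)).
  { exists 1. intros z [K ->]. apply hitB_bounds; auto. }
  destruct (growing_cv _ Hg Hb) as [l Hl].
  unfold pot. rewrite (lim_ok _ l Hl). exact Hl.
Qed.

Lemma pot_bounds n Q A B x : valid_rates n Q -> (x < n)%nat -> 0 <= pot n Q A B x <= 1.
Proof.
  intros hQ Hx. pose proof (pot_cv n Q A B x hQ Hx) as H. split.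
  - eapply Rle_cv_lim; [|apply cv_const|exact H].
    intros; apply hitB_bounds; auto.
  - eapply Rle_cv_lim; [|exact H|apply cv_const].
    intros; apply hitB_bounds; auto.
Qed.

Lemma pot_B n Q A B x : valid_rates n Q -> (x < n)%nat -> B x = true -> pot n Q A B x = 1.
Proof.
  intros hQ Hx HB. apply (UL_sequence (fun K => hitB n Q A B K x)).
  apply pot_cv; auto. eapply Un_cv_ext; [|apply cv_const].
  intros K. destruct K; simpl; rewrite HB; reflexivity.
Qed.

Lemma pot_A n Q A B x : valid_rates n Q -> (x < n)%nat -> A x = true -> B x = false ->
  pot n Q A B x = 0.
Proof.
  intros hQ Hx HA HB. apply (UL_sequence (fun K => hitB n Q A B K x)).
  apply pot_cv; auto. eapply Un_cv_ext; [|apply cv_const].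
  intros K. destruct K; simpl; rewrite HB; [|rewrite HA]; reflexivity.
Qed.

Lemma pot_harm n Q A B x : valid_rates n Q -> (x < n)%nat -> A x = false -> B x = false ->
  pot n Q A B x = rsum n (fun y => jump n Q x y * pot n Q A B y).
Proof.
  intros hQ Hx HA HB. apply (UL_sequence (fun K => hitB n Q A B (K + 1) x)).
  - apply (CV_shift' (fun K => hitB n Q A B K x) 1). apply pot_cv; auto.
  - eapply Un_cv_ext.
    { intros K. rewrite Nat.add_1_r. simpl. rewrite HB, HA. reflexivity. }
    apply rsum_cv. intros y Hy. apply CV_mult. apply cv_const. apply pot_cv; auto.
Qed.

Lemma escape_eq n Q A B x : valid_rates n Q -> (x < n)%nat ->
  escape n Q A B x = rsum n (fun y => jump n Q x y * pot n Q A B y).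
Proof.
  intros hQ Hx. unfold escape. apply lim_ok. unfold escape_le.
  apply rsum_cv. intros y Hy. apply CV_mult. apply cv_const. apply pot_cv; auto.
Qed.

Lemma hold0_Q0 n Q x y : valid_rates n Q -> (x < n)%nat -> hold n Q x = 0 ->
  (y < n)%nat -> y <> x -> Q x y = 0.
Proof.
  intros hQ Hx H0 Hy Hyx. apply Rle_antisym; [|apply hQ; auto].
  unfold hold in H0. rewrite <- H0.
  assert (Ht := rsum_term n (fun z => if Nat.eqb z x then 0 else Q x z) y).
  simpl in Ht. rewrite (proj2 (Nat.eqb_neq _ _) Hyx) in Ht. apply Ht; auto.
  intros z Hz. destruct (Nat.eqb_spec z x); [lra|]. apply hQ; auto.
Qed.

Lemma hold_jump n Q x (g : nat -> R) : valid_rates n Q -> (x < n)%nat ->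
  hold n Q x * rsum n (fun y => jump n Q x y * g y) =
  rsum n (fun y => if Nat.eqb y x then 0 else Q x y * g y).
Proof.
  intros hQ Hx. destruct (Req_dec (hold n Q x) 0) as [E|E].
  - rewrite E, Rmult_0_l. symmetry. transitivity (rsum n (fun _ : nat => 0)); [|apply rsum_zero].
    apply rsum_ext. intros y Hy.
    destruct (Nat.eqb_spec y x); [reflexivity|]. rewrite (hold0_Q0 n Q x y); auto. ring.
  - rewrite <- rsum_scal. apply rsum_ext. intros y Hy. unfold jump.
    destruct (Nat.eqb y x); [ring|]. field; auto.
Qed.

Lemma Lop_harm n Q A B x : valid_rates n Q -> (x < n)%nat -> A x = false -> B x = false ->
  Lop n Q (pot n Q A B) x = 0.
Proof.
  intros hQ Hx HA HB. unfold Lop.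
  set (g := pot n Q A B).
  assert (H1 : rsum n (fun y => if Nat.eqb y x then 0 else Q x y * (g y - g x)) =
     rsum n (fun y => if Nat.eqb y x then 0 else Q x y * g y) - g x * hold n Q x).
  { unfold hold. rewrite <- rsum_scal, <- rsum_minus. apply rsum_ext. intros y _.
    destruct (Nat.eqb y x); ring. }
  rewrite H1, <- hold_jump; auto. unfold g. rewrite <- pot_harm; auto. ring.
Qed.

Lemma cap_eq n Q mu A B : valid_rates n Q ->
  (forall x, A x = true -> B x = false) ->
  capacity n Q mu A B = rsum n (fun x => if A x then mu x * Lop n Q (pot n Q A B) x else 0).
Proof.
  intros hQ hdisj. unfold capacity. apply rsum_ext. intros x Hx.
  destruct (A x) eqn:HA; [|reflexivity].
  rewrite escape_eq; auto. rewrite Rmult_assoc, hold_jump; auto. f_equal.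
  unfold Lop. apply rsum_ext. intros y Hy. rewrite (pot_A n Q A B x); auto.
  destruct (Nat.eqb y x); ring.
Qed.


Definition cc (Q : nat -> nat -> R) (mu : nat -> R) x y := if Nat.eqb y x then 0 else mu x * Q x y.
Definition DS n (F : nat -> nat -> R) := rsum n (fun x => rsum n (fun y => F x y)).
Definition Bal n Q mu := forall y, (y < n)%nat ->
  rsum n (fun x => cc Q mu x y) = rsum n (fun x => cc Q mu y x).
Definition En n Q mu (h : nat -> R) := / 2 * DS n (fun x y => cc Q mu x y * (h x - h y) ^ 2).
Definition indR (a b t : R) : R := if Rlt_dec a t then (if Rle_dec t b then 1 else 0) else 0.

Lemma DS_ext n F G : (forall x y, (x < n)%nat -> (y < n)%nat -> F x y = G x y) -> DS n F = DS n G.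
Proof. intros H. unfold DS. apply rsum_ext. intros. apply rsum_ext. auto. Qed.
Lemma DS_le n F G : (forall x y, (x < n)%nat -> (y < n)%nat -> F x y <= G x y) -> DS n F <= DS n G.
Proof. intros H. unfold DS. apply rsum_le. intros. apply rsum_le. auto. Qed.
Lemma DS_nonneg n F : (forall x y, (x < n)%nat -> (y < n)%nat -> 0 <= F x y) -> 0 <= DS n F.
Proof. intros H. unfold DS. apply rsum_nonneg. intros. apply rsum_nonneg. auto. Qed.
Lemma DS_plus n F G : DS n (fun x y => F x y + G x y) = DS n F + DS n G.
Proof. unfold DS. rewrite <- rsum_plus. apply rsum_ext. intros. apply rsum_plus. Qed.
Lemma DS_minus n F G : DS n (fun x y => F x y - G x y) = DS n F - DS n G.
Proof. unfold DS. rewrite <- rsum_minus. apply rsum_ext. intros. apply rsum_minus. Qed.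
Lemma DS_scal n c F : DS n (fun x y => c * F x y) = c * DS n F.
Proof. unfold DS. rewrite <- rsum_scal. apply rsum_ext. intros. apply rsum_scal. Qed.
Lemma DS_swap n F : DS n F = DS n (fun x y => F y x).
Proof. unfold DS. apply rsum_swap. Qed.

Lemma bal_lemma n Q mu (h : nat -> R) : Bal n Q mu ->
  DS n (fun x y => cc Q mu x y * h y) = DS n (fun x y => cc Q mu x y * h x).
Proof.
  intros HB. rewrite DS_swap. unfold DS.
  transitivity (rsum n (fun x => h x * rsum n (fun y => cc Q mu y x))).
  - apply rsum_ext. intros x _. rewrite <- rsum_scal. apply rsum_ext. intros; ring.
  - apply rsum_ext. intros x Hx. rewrite HB; auto. rewrite <- rsum_scal. apply rsum_ext. intros; ring.
Qed.

Lemma bal_zero n Q mu (h : nat -> R) : Bal n Q mu ->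
  DS n (fun x y => cc Q mu x y * (h y - h x)) = 0.
Proof.
  intros HB. transitivity (DS n (fun x y => cc Q mu x y * h y) - DS n (fun x y => cc Q mu x y * h x)).
  - rewrite <- DS_minus. apply DS_ext. intros; ring.
  - rewrite bal_lemma; auto. ring.
Qed.

Lemma mu_Lop n Q mu g x :
  mu x * Lop n Q g x = rsum n (fun y => cc Q mu x y * (g y - g x)).
Proof.
  unfold Lop. rewrite <- rsum_scal. apply rsum_ext. intros y _. unfold cc.
  destruct (Nat.eqb y x); ring.
Qed.

Lemma capform n Q mu A B (psi : nat -> R) : valid_rates n Q ->
  (forall x, A x = true -> B x = false) ->
  (forall x, (x < n)%nat -> A x = true -> psi x = 1) ->
  (forall x, (x < n)%nat -> B x = true -> psi x = 0) ->
  capacity n Q mu A B =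
  DS n (fun x y => cc Q mu x y * (pot n Q A B y - pot n Q A B x) * psi x).
Proof.
  intros hQ hd H1 H0. rewrite cap_eq; auto. unfold DS. apply rsum_ext. intros x Hx.
  set (g := pot n Q A B).
  assert (E : rsum n (fun y => cc Q mu x y * (g y - g x) * psi x) = mu x * Lop n Q g x * psi x).
  { rewrite mu_Lop, (Rmult_comm (rsum _ _) (psi x)), <- rsum_scal. apply rsum_ext. intros; ring. }
  rewrite E. destruct (A x) eqn:HA.
  - rewrite H1; auto. ring.
  - destruct (B x) eqn:HB.
    + rewrite H0; auto. ring.
    + unfold g. rewrite Lop_harm; auto. ring.
Qed.

Lemma cap_energy n Q mu A B : valid_rates n Q -> Bal n Q mu ->
  (forall x, A x = true -> B x = false) ->
  capacity n Q mu A B = En n Q mu (pot n Q A B).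
Proof.
  intros hQ HB hd. set (g := pot n Q A B).
  rewrite (capform n Q mu A B (fun x => 1 - g x)); auto.
  2:{ intros. unfold g. rewrite pot_A; auto. ring. }
  2:{ intros. unfold g. rewrite pot_B; auto. ring. }
  fold g. unfold En.
  transitivity (DS n (fun x y => cc Q mu x y * (g y - g x)) - / 2 *
                DS n (fun x y => cc Q mu x y * ((fun z => g z * g z) y - (fun z => g z * g z) x))
                + / 2 * DS n (fun x y => cc Q mu x y * (g x - g y) ^ 2)).
  - rewrite <- !DS_scal, <- DS_minus, <- DS_plus. apply DS_ext. intros. simpl. clearbody g. field.
  - rewrite !bal_zero; auto. ring.
Qed.

Lemma cap_cut n Q mu A B (h : nat -> R) t : valid_rates n Q -> Bal n Q mu ->
  (forall x, (x < n)%nat -> 0 <= mu x) ->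
  (forall x, A x = true -> B x = false) ->
  (forall x, (x < n)%nat -> A x = true -> h x = 0) ->
  (forall x, (x < n)%nat -> B x = true -> h x = 1) ->
  0 < t -> t <= 1 ->
  capacity n Q mu A B <= DS n (fun x y => cc Q mu x y * indR (h x) (h y) t).
Proof.
  intros hQ HB hmu hd hA hB Ht0 Ht1. set (g := pot n Q A B).
  set (psi := fun x => if Rlt_dec (h x) t then 1 else 0).
  rewrite (capform n Q mu A B psi); auto.
  2:{ intros. unfold psi. rewrite hA; auto. destruct (Rlt_dec 0 t); lra. }
  2:{ intros. unfold psi. rewrite hB; auto. destruct (Rlt_dec 1 t); lra. }
  fold g.
  assert (E : DS n (fun x y => cc Q mu x y * (g y - g x) * psi x) =
     DS n (fun x y => cc Q mu x y * (g y * psi x)) -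
                DS n (fun x y => cc Q mu x y * ((fun z => g z * psi z) x))).
  { rewrite <- DS_minus. apply DS_ext. intros. simpl. ring. }
  rewrite E. rewrite <- bal_lemma; auto. rewrite <- DS_minus. apply DS_le. intros x y Hx Hy.
  assert (Hc : 0 <= cc Q mu x y).
  { unfold cc. destruct (Nat.eqb_spec y x); [lra|]. apply Rmult_le_pos; [apply hmu; auto|apply hQ; auto]. }
  assert (Hg : 0 <= g y <= 1) by (apply pot_bounds; auto).
  unfold psi, indR. destruct (Rlt_dec (h x) t); destruct (Rlt_dec (h y) t);
    try destruct (Rle_dec t (h y)); try lra; nra.
Qed.


Fixpoint insert (a : R) (l : list R) : list R :=
  match l with nil => a :: nil | b :: l' => if Rle_dec a b then a :: b :: l' else b :: insert a l' end.
Fixpoint isort (l : list R) : list R :=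
  match l with nil => nil | a :: l' => insert a (isort l') end.
Fixpoint sorted (l : list R) : Prop :=
  match l with nil => True | a :: l' => (forall z, In z l' -> a <= z) /\ sorted l' end.
Fixpoint pairsum (F : R -> R -> R) (l : list R) : R :=
  match l with nil => 0 | a :: l' => match l' with nil => 0 | b :: _ => F a b + pairsum F l' end end.
Fixpoint lastR (a : R) (l : list R) : R :=
  match l with nil => a | b :: l' => lastR b l' end.

Lemma In_insert a l z : In z (insert a l) <-> a = z \/ In z l.
Proof.
  induction l; simpl. - tauto.
  - destruct (Rle_dec a a0); simpl. + tauto. + rewrite IHl. tauto.
Qed.

Lemma len_insert a l : length (insert a l) = S (length l).
Proof. induction l; simpl; auto. destruct (Rle_dec a a0); simpl; auto. Qed.

Lemma sorted_insert a l : sorted l -> sorted (insert a l).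
Proof.
  induction l as [|b l IH]; simpl; intros H.
  - split; auto. intros z [].
  - destruct H as [H1 H2]. destruct (Rle_dec a b) as [Hab|Hab]; simpl.
    + split; [|split; auto]. intros z [<-|Hz]; auto. apply Rle_trans with b; auto.
    + split; auto. intros z Hz. apply In_insert in Hz. destruct Hz as [<-|Hz]; [lra|auto].
Qed.

Lemma In_isort l z : In z (isort l) <-> In z l.
Proof. induction l; simpl. tauto. rewrite In_insert, IHl. intuition. Qed.
Lemma len_isort l : length (isort l) = length l.
Proof. induction l; simpl; auto. rewrite len_insert; auto. Qed.
Lemma sorted_isort l : sorted (isort l).
Proof. induction l; simpl; auto. apply sorted_insert; auto. Qed.

Lemma pairsum_cons2 F a b l : pairsum F (a :: b :: l) = F a b + pairsum F (b :: l).
Proof. reflexivity. Qed.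

Lemma pairsum_le F G l : sorted l ->
  (forall p q, In p l -> In q l -> p <= q -> F p q <= G p q) -> pairsum F l <= pairsum G l.
Proof.
  induction l as [|a l IH]; intros Hs H; [simpl; lra|].
  destruct l as [|b l]; [simpl; lra|]. rewrite !pairsum_cons2.
  destruct Hs as [H1 H2].
  assert (F a b <= G a b) by (apply H; [simpl; auto|simpl; auto|apply H1; simpl; auto]).
  assert (pairsum F (b :: l) <= pairsum G (b :: l)).
  { apply IH; auto. intros p q Hp Hq. apply H; simpl; auto. }
  lra.
Qed.

Lemma pairsum_ext F G l : sorted l ->
  (forall p q, In p l -> In q l -> p <= q -> F p q = G p q) -> pairsum F l = pairsum G l.
Proof.
  intros Hs H. apply Rle_antisym; apply pairsum_le; auto; intros; rewrite H; auto; lra.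
Qed.

Lemma pairsum_zero l : pairsum (fun _ _ => 0) l = 0.
Proof. induction l as [|a l IH]; [reflexivity|]. destruct l; [reflexivity|]. rewrite pairsum_cons2, IH; lra. Qed.

Lemma pairsum_scal c F l : pairsum (fun p q => c * F p q) l = c * pairsum F l.
Proof. induction l as [|a l IH]; [simpl; lra|]. destruct l; [simpl; lra|]. rewrite !pairsum_cons2, IH; lra. Qed.

Lemma pairsum_DS n F l :
  DS n (fun x y => pairsum (F x y) l) = pairsum (fun p q => DS n (fun x y => F x y p q)) l.
Proof.
  induction l as [|a l IH].
  - simpl. unfold DS. transitivity (rsum n (fun _ : nat => 0)); [|apply rsum_zero].
    apply rsum_ext. intros. apply rsum_zero.
  - destruct l as [|b l].
    + simpl. unfold DS. transitivity (rsum n (fun _ : nat => 0)); [|apply rsum_zero].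
      apply rsum_ext. intros. apply rsum_zero.
    + rewrite pairsum_cons2, <- IH. rewrite <- DS_plus. apply DS_ext. intros. reflexivity.
Qed.

Lemma telescope a l : pairsum (fun p q => q - p) (a :: l) = lastR a l - a.
Proof.
  revert a; induction l as [|b l IH]; intros a; [simpl; lra|].
  rewrite pairsum_cons2, IH. simpl. lra.
Qed.

Lemma last_max a l : sorted (a :: l) -> forall z, In z (a :: l) -> z <= lastR a l.
Proof.
  revert a; induction l as [|b l IH]; intros a Hs z Hz.
  - simpl in *. destruct Hz as [<-|[]]; lra.
  - simpl lastR. destruct Hs as [H1 H2]. destruct Hz as [<-|Hz].
    + apply Rle_trans with b. apply H1; simpl; auto. apply IH; simpl; auto.
    + apply IH; auto.
Qed.

Lemma last_in a l : In (lastR a l) (a :: l).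
Proof. revert a; induction l as [|b l IH]; intros a; simpl; auto. right. apply IH. Qed.

Lemma pairsum_cs F l :
  (pairsum F l) ^ 2 <= INR (length l) * pairsum (fun p q => F p q ^ 2) l.
Proof.
  induction l as [|a l IH]; [simpl; lra|].
  destruct l as [|b l]; [simpl; lra|].
  rewrite !pairsum_cons2. change (length (a :: b :: l)) with (S (length (b :: l))).
  rewrite S_INR. set (m := INR (length (b :: l))) in *.
  assert (Hm : 1 <= m). { unfold m. simpl length. rewrite S_INR. pose proof (pos_INR (length l)). lra. }
  set (s1 := pairsum F (b :: l)) in *. set (S2 := pairsum (fun p q => F p q ^ 2) (b :: l)) in *.
  set (f := F a b).
  pose proof (pow2_ge_0 (m * f - s1)).
  assert (0 <= m * (m * f ^ 2 + S2 - 2 * f * s1)) by nra.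
  assert (0 <= m * f ^ 2 + S2 - 2 * f * s1).
  { apply Rmult_le_reg_l with m; [lra|]. lra. }
  nra.
Qed.

Lemma pairsum_nonneg F l : sorted l -> (forall p q, p <= q -> 0 <= F p q) -> 0 <= pairsum F l.
Proof.
  intros Hs H. rewrite <- (pairsum_zero l). apply pairsum_le; auto.
Qed.

Lemma pairsum_sq F l : sorted l -> (forall p q, p <= q -> 0 <= F p q) ->
  pairsum (fun p q => F p q ^ 2) l <= (pairsum F l) ^ 2.
Proof.
  induction l as [|a l IH]; intros Hs H; [simpl; lra|].
  destruct l as [|b l]; [simpl; lra|]. rewrite !pairsum_cons2.
  destruct Hs as [H1 H2].
  assert (Hab : 0 <= F a b) by (apply H, H1; simpl; auto).
  assert (0 <= pairsum F (b :: l)) by (apply pairsum_nonneg; auto).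
  specialize (IH H2 H). nra.
Qed.

Lemma indR_bounds a b t : 0 <= indR a b t <= 1.
Proof. unfold indR. destruct (Rlt_dec a t); [destruct (Rle_dec t b)|]; lra. Qed.
Lemma indR_0b a b t : ~ (t <= b) -> indR a b t = 0.
Proof. intros H. unfold indR. destruct (Rlt_dec a t); [destruct (Rle_dec t b)|]; tauto. Qed.
Lemma indR_0a a b t : ~ (a < t) -> indR a b t = 0.
Proof. intros H. unfold indR. destruct (Rlt_dec a t); tauto. Qed.

Lemma edgeL1 a b x l : sorted (x :: l) -> a <= x ->
  pairsum (fun p q => (q - p) * indR a b q) (x :: l) <= Rmax 0 (b - x).
Proof.
  revert x; induction l as [|y l IH]; intros x Hs Hax.
  - simpl. apply Rmax_l.
  - rewrite pairsum_cons2. destruct Hs as [H1 H2].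
    assert (Hxy : x <= y) by (apply H1; simpl; auto).
    specialize (IH y H2 ltac:(lra)).
    pose proof (indR_bounds a b y).
    pose proof (Rmax_l 0 (b - x)). pose proof (Rmax_r 0 (b - x)).
    destruct (Rle_dec y b) as [Hyb|Hyb].
    + rewrite Rmax_right in IH by lra. nra.
    + rewrite Rmax_left in IH by lra. rewrite (indR_0b a b y) by lra. lra.
Qed.

Lemma edgeL2 a b x l : sorted (x :: l) -> In a (x :: l) -> a <= b ->
  pairsum (fun p q => (q - p) * indR a b q) (x :: l) <= b - a.
Proof.
  revert x; induction l as [|y l IH]; intros x Hs Ha Hab.
  - simpl. lra.
  - destruct Ha as [->|Ha].
    + pose proof (edgeL1 a b a (y :: l) Hs ltac:(lra)). unfold Rmax in H.
      destruct (Rle_dec 0 (b - a)); lra.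
    + rewrite pairsum_cons2. destruct Hs as [H1 H2].
      assert (Hya : y <= a).
      { destruct Ha as [->|Ha]; [lra|]. destruct H2 as [H3 _]. apply H3; auto. }
      specialize (IH y H2 Ha Hab). rewrite (indR_0a a b y) by lra. lra.
Qed.

Lemma edge_bound a b l : sorted l -> In a l ->
  pairsum (fun p q => (q - p) ^ 2 * indR a b q) l <= (a - b) ^ 2.
Proof.
  intros Hs Ha. destruct (Rle_dec a b) as [Hab|Hab].
  - destruct l as [|x l]; [simpl; nra|].
    assert (E : pairsum (fun p q => (q - p) ^ 2 * indR a b q) (x :: l) =
                pairsum (fun p q => ((q - p) * indR a b q) ^ 2) (x :: l)).
    { apply pairsum_ext; auto. intros. unfold indR.
      destruct (Rlt_dec a q); [destruct (Rle_dec q b)|]; ring. }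
    rewrite E.
    assert (Hn : forall p q, p <= q -> 0 <= (q - p) * indR a b q).
    { intros p q Hpq. unfold indR. destruct (Rlt_dec a q); [destruct (Rle_dec q b)|]; nra. }
    pose proof (pairsum_sq _ _ Hs Hn).
    pose proof (pairsum_nonneg _ _ Hs Hn).
    pose proof (edgeL2 a b x l Hs Ha Hab). nra.
  - rewrite (pairsum_ext _ (fun _ _ => 0)); auto.
    + rewrite pairsum_zero. nra.
    + intros. destruct (Rlt_dec a q); [rewrite (indR_0b a b q) by lra|rewrite (indR_0a a b q) by lra]; ring.
Qed.


Lemma comb n (W : nat -> nat -> R) (h : nat -> R) K :
  (forall x y, (x < n)%nat -> (y < n)%nat -> 0 <= W x y) ->
  (forall x, (x < n)%nat -> 0 <= h x <= 1) ->
  (exists a, (a < n)%nat /\ h a = 0) -> (exists b, (b < n)%nat /\ h b = 1) ->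
  (forall t, 0 < t -> t <= 1 -> K <= DS n (fun x y => W x y * indR (h x) (h y) t)) ->
  K <= INR n * DS n (fun x y => W x y * (h x - h y) ^ 2).
Proof.
  intros HW Hh [a0 [Ha0 Ha0']] [b0 [Hb0 Hb0']] HK.
  set (l := isort (map h (seq 0 n))).
  assert (Hin : forall z, In z l <-> exists x, (x < n)%nat /\ h x = z).
  { intros z. unfold l. rewrite In_isort, in_map_iff. split.
    - intros [x [Hx1 Hx2]]. apply in_seq in Hx2. exists x. split; [lia|auto].
    - intros [x [Hx1 Hx2]]. exists x. split; auto. apply in_seq. lia. }
  assert (Hval : forall z, In z l -> 0 <= z <= 1).
  { intros z Hz. apply Hin in Hz. destruct Hz as [x [Hx <-]]. auto. }
  assert (Hs : sorted l) by apply sorted_isort.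
  assert (Hlen : length l = n).
  { unfold l. rewrite len_isort, length_map, length_seq. reflexivity. }
  assert (H0in : In 0 l) by (apply Hin; eauto).
  assert (H1in : In 1 l) by (apply Hin; eauto).
  destruct l as [|x0 l'] eqn:El; [destruct H0in|].
  assert (Hx0 : x0 = 0).
  { assert (0 <= x0) by (apply Hval; simpl; auto).
    destruct H0in as [E|E]; [lra|]. destruct Hs as [Hs1 _]. specialize (Hs1 0 E). lra. }
  assert (Hlast : lastR x0 l' = 1).
  { assert (lastR x0 l' <= 1) by (apply Hval, last_in).
    pose proof (last_max x0 l' Hs 1 H1in). lra. }
  set (Wt := pairsum (fun p q => (q - p) ^ 2) (x0 :: l')).
  assert (HW1 : 1 <= INR n * Wt).
  { pose proof (pairsum_cs (fun p q => q - p) (x0 :: l')). rewrite telescope, Hlast, Hx0 in H.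
    simpl length in H, Hlen. rewrite Hlen in H. unfold Wt. rewrite Hx0. nra. }
  assert (HWt : 0 <= Wt).
  { unfold Wt. apply pairsum_nonneg; auto. intros; apply pow2_ge_0. }
  assert (HD : 0 <= DS n (fun x y => W x y * (h x - h y) ^ 2)).
  { apply DS_nonneg. intros. apply Rmult_le_pos; auto. apply pow2_ge_0. }
  assert (Key : K * Wt <= DS n (fun x y => W x y * (h x - h y) ^ 2)).
  { unfold Wt. rewrite <- pairsum_scal.
    apply Rle_trans with (pairsum (fun p q => DS n (fun x y => (q - p) ^ 2 * (W x y * indR (h x) (h y) q))) (x0 :: l')).
    - apply pairsum_le; auto. intros p q Hp Hq Hpq. rewrite DS_scal.
      destruct (Req_dec p q) as [E|E].
      + subst. replace (q - q) with 0 by ring. lra.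
      + apply Hval in Hp. apply Hval in Hq.
        assert (K <= DS n (fun x y => W x y * indR (h x) (h y) q)) by (apply HK; lra).
        pose proof (pow2_ge_0 (q - p)). nra.
    - rewrite <- pairsum_DS. apply DS_le. intros x y Hx Hy.
      rewrite (pairsum_ext _ (fun p q => W x y * ((q - p) ^ 2 * indR (h x) (h y) q))); auto.
      2:{ intros; ring. }
      rewrite pairsum_scal. apply Rmult_le_compat_l; auto.
      apply edge_bound; auto. apply Hin. exists x; split; auto. }
  destruct (Rle_dec K 0).
  - pose proof (pos_INR n). nra.
  - assert (K * 1 <= K * (INR n * Wt)) by (apply Rmult_le_compat_l; lra).
    assert (INR n * (K * Wt) <= INR n * DS n (fun x y => W x y * (h x - h y) ^ 2))
      by (apply Rmult_le_compat_l; [apply pos_INR|lra]).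
    lra.
Qed.


Lemma mu_pos n Q mu : valid_rates n Q -> irreducible n Q -> invariant_prob n Q mu ->
  forall x, (x < n)%nat -> 0 < mu x.
Proof.
  intros hQ hirr [hnn [hsum hbal]].
  assert (Hstep : forall x y, (x < n)%nat -> (y < n)%nat -> x <> y -> 0 < Q x y ->
            mu y = 0 -> mu x = 0).
  { intros x y Hx Hy Hxy HQ Hy0. specialize (hbal y Hy). rewrite Hy0, Rmult_0_l in hbal.
    assert (Ht := rsum_term n (fun z => if Nat.eqb z y then 0 else mu z * Q z y) x).
    simpl in Ht. rewrite (proj2 (Nat.eqb_neq _ _) Hxy) in Ht. rewrite hbal in Ht.
    assert (mu x * Q x y <= 0).
    { apply Ht; auto. intros z Hz. destruct (Nat.eqb_spec z y); [lra|].
      apply Rmult_le_pos; [apply hnn; auto|apply hQ; auto]. }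
    pose proof (hnn x Hx). nra. }
  assert (Hcrt : forall x y, clos_refl_trans nat
      (fun a b => (a < n)%nat /\ (b < n)%nat /\ a <> b /\ 0 < Q a b) x y -> mu y = 0 -> mu x = 0).
  { intros x y Hc. induction Hc as [x y [H1 [H2 [H3 H4]]]| x | x y z _ IH1 _ IH2]; intros H0.
    - eapply Hstep; eauto.
    - auto.
    - auto. }
  intros x Hx. destruct (Rle_lt_dec (mu x) 0) as [Hle|Hlt]; [|auto].
  assert (Hx0 : mu x = 0) by (pose proof (hnn x Hx); lra).
  exfalso.
  assert (rsum n mu = rsum n (fun _ => 0)).
  { apply rsum_ext. intros z Hz. apply (Hcrt z x); auto. }
  rewrite rsum_zero in H. lra.
Qed.

Lemma bal_Q n Q mu : invariant_prob n Q mu -> Bal n Q mu.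
Proof.
  intros [_ [_ hbal]] y Hy. unfold cc.
  transitivity (rsum n (fun x => if Nat.eqb x y then 0 else mu x * Q x y)).
  { apply rsum_ext. intros. rewrite Nat.eqb_sym. reflexivity. }
  rewrite hbal; auto. unfold hold. rewrite <- rsum_scal. apply rsum_ext. intros.
  destruct (Nat.eqb x y); ring.
Qed.

Lemma cc_sym_eq n Q mu x y : (forall z, (z < n)%nat -> 0 < mu z) -> (x < n)%nat -> (y < n)%nat ->
  cc (sym_rates Q mu) mu x y = (cc Q mu x y + cc Q mu y x) / 2.
Proof.
  intros hp Hx Hy. unfold cc, sym_rates. rewrite (Nat.eqb_sym x y).
  destruct (Nat.eqb y x); [field|]. pose proof (hp x Hx). field. lra.
Qed.

Lemma cc_nonneg n Q mu x y : valid_rates n Q -> (forall z, (z < n)%nat -> 0 < mu z) ->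
  (x < n)%nat -> (y < n)%nat -> 0 <= cc Q mu x y.
Proof.
  intros hQ hp Hx Hy. unfold cc. destruct (Nat.eqb_spec y x); [lra|].
  apply Rmult_le_pos; [left; apply hp; auto|apply hQ; auto].
Qed.

Lemma sym_valid n Q mu : valid_rates n Q -> (forall z, (z < n)%nat -> 0 < mu z) ->
  valid_rates n (sym_rates Q mu).
Proof.
  intros hQ hp x y Hx Hy Hxy. unfold sym_rates.
  assert (0 <= Q x y) by (apply hQ; auto). assert (0 <= Q y x) by (apply hQ; auto).
  pose proof (hp x Hx). pose proof (hp y Hy).
  assert (0 <= mu y * Q y x / mu x).
  { unfold Rdiv. apply Rmult_le_pos; [nra|]. left; apply Rinv_0_lt_compat; auto. }
  lra.
Qed.

Lemma sym_bal n Q mu : Bal n Q mu -> (forall z, (z < n)%nat -> 0 < mu z) ->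
  Bal n (sym_rates Q mu) mu.
Proof.
  intros hB hp y Hy.
  rewrite (rsum_ext n (fun x => cc (sym_rates Q mu) mu x y) (fun x => / 2 * (cc Q mu x y + cc Q mu y x)))
    by (intros; rewrite (cc_sym_eq n); auto; unfold Rdiv; ring).
  rewrite (rsum_ext n (fun x => cc (sym_rates Q mu) mu y x) (fun x => / 2 * (cc Q mu y x + cc Q mu x y)))
    by (intros; rewrite (cc_sym_eq n); auto; unfold Rdiv; ring).
  rewrite !rsum_scal, !rsum_plus. ring.
Qed.

Lemma En_sym n Q mu h : (forall z, (z < n)%nat -> 0 < mu z) ->
  En n (sym_rates Q mu) mu h = En n Q mu h.
Proof.
  intros hp. unfold En. f_equal.
  rewrite (DS_ext n _ (fun x y => / 2 * (cc Q mu x y * (h x - h y) ^ 2) +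
                                  / 2 * (cc Q mu y x * (h y - h x) ^ 2))).
  2:{ intros. rewrite (cc_sym_eq n); auto. field. }
  rewrite DS_plus, !DS_scal.
  assert (E : DS n (fun x y => cc Q mu y x * (h y - h x) ^ 2) =
              DS n (fun x y => cc Q mu x y * (h x - h y) ^ 2)).
  { rewrite DS_swap. reflexivity. }
  rewrite E. field.
Qed.

Lemma dirichlet n Qs mu A B (f : nat -> R) : valid_rates n Qs ->
  (forall x y, (x < n)%nat -> (y < n)%nat -> cc Qs mu x y = cc Qs mu y x) ->
  (forall x y, (x < n)%nat -> (y < n)%nat -> 0 <= cc Qs mu x y) ->
  (forall x, A x = true -> B x = false) ->
  (forall x, (x < n)%nat -> A x = true -> f x = 0) ->
  (forall x, (x < n)%nat -> B x = true -> f x = 1) ->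
  En n Qs mu (pot n Qs A B) <= En n Qs mu f.
Proof.
  intros hQ hsym hnn hd hA hB. set (g := pot n Qs A B). set (u := fun x => f x - g x).
  set (c := cc Qs mu).
  assert (T1 : DS n (fun x y => c x y * (g x - g y) * u x) = 0).
  { unfold DS. transitivity (rsum n (fun _ : nat => 0)); [|apply rsum_zero].
    apply rsum_ext. intros x Hx.
    transitivity (- (u x * (mu x * Lop n Qs g x))).
    - rewrite mu_Lop.
      transitivity ((- u x) * rsum n (fun y => cc Qs mu x y * (g y - g x))); [|ring].
      rewrite <- rsum_scal; apply rsum_ext; intros; unfold c; ring.
    - destruct (A x) eqn:HA.
      + unfold u, g. rewrite hA, pot_A; auto. ring.
      + destruct (B x) eqn:HBx.
        * unfold u, g. rewrite hB, pot_B; auto. ring.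
        * unfold g. rewrite Lop_harm; auto. ring. }
  assert (T2 : DS n (fun x y => c x y * (g x - g y) * u y) = - DS n (fun x y => c x y * (g x - g y) * u x)).
  { rewrite DS_swap. transitivity ((-1) * DS n (fun x y => c x y * (g x - g y) * u x)); [|ring].
    rewrite <- DS_scal.
    apply DS_ext. intros x y Hx Hy. unfold c. rewrite hsym; auto. ring. }
  assert (E : En n Qs mu f = En n Qs mu g + / 2 * DS n (fun x y => c x y * (u x - u y) ^ 2)
      + (DS n (fun x y => c x y * (g x - g y) * u x) - DS n (fun x y => c x y * (g x - g y) * u y))).
  { unfold En. rewrite <- !DS_scal, <- DS_minus, <- !DS_plus. apply DS_ext. intros. unfold u, c. field. }
  rewrite E, T2, T1.
  assert (0 <= DS n (fun x y => c x y * (u x - u y) ^ 2)).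
  { apply DS_nonneg. intros. apply Rmult_le_pos; [apply hnn; auto|apply pow2_ge_0]. }
  lra.
Qed.


Theorem corollary4p6 (n : nat) (Q : nat -> nat -> R) (mu : nat -> R)
  (A B : nat -> bool)
  (hQ : valid_rates n Q) (hirr : irreducible n Q) (hmu : invariant_prob n Q mu)
  (hAE : forall x, A x = true -> (x < n)%nat)
  (hBE : forall x, B x = true -> (x < n)%nat)
  (hdisj : forall x, A x = true -> B x = false)
  (hAne : exists x, A x = true) (hBne : exists x, B x = true) :
  capacity n (sym_rates Q mu) mu A B <= capacity n Q mu A B /\
  capacity n Q mu A B <= 2 * INR n * capacity n (sym_rates Q mu) mu A B.
Proof.
  pose proof (mu_pos n Q mu hQ hirr hmu) as hp.
  pose proof (bal_Q n Q mu hmu) as hB.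
  set (Qs := sym_rates Q mu).
  assert (hQs : valid_rates n Qs) by (apply sym_valid; auto).
  assert (hBs : Bal n Qs mu) by (apply sym_bal; auto).
  assert (hnn : forall x, (x < n)%nat -> 0 <= mu x) by (intros; left; auto).
  rewrite (cap_energy n Qs mu A B hQs hBs hdisj).
  split.
  - rewrite (cap_energy n Q mu A B hQ hB hdisj).
    apply Rle_trans with (En n Qs mu (pot n Q A B)).
    + apply dirichlet; auto.
      * intros x y Hx Hy. unfold Qs. rewrite !(cc_sym_eq n); auto. field.
      * intros. apply (cc_nonneg n); auto.
      * intros. apply (pot_A n Q A B); auto.
      * intros. apply (pot_B n Q A B); auto.
    + unfold Qs. rewrite En_sym; auto. lra.
  - assert (E : En n Qs mu (pot n Qs A B) = En n Q mu (pot n Qs A B)) by (apply En_sym; auto).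
    rewrite E. unfold En.
    set (gs := pot n Qs A B).
    replace (2 * INR n * (/ 2 * DS n (fun x y => cc Q mu x y * (gs x - gs y) ^ 2)))
      with (INR n * DS n (fun x y => cc Q mu x y * (gs x - gs y) ^ 2)) by field.
    apply comb.
    + intros. apply (cc_nonneg n); auto.
    + intros. apply pot_bounds; auto.
    + destruct hAne as [a Ha]. exists a. split; auto. apply pot_A; auto.
    + destruct hBne as [b Hb]. exists b. split; auto. apply pot_B; auto.
    + intros t Ht0 Ht1. apply cap_cut; auto.
      * intros. apply (pot_A n Qs A B); auto.
      * intros. apply (pot_B n Qs A B); auto.
Qed.
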